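(* Let $b>a>0$, $x\in\mathbb{R}^d$, and let $K$ be a cube containing $B(x,a)$ with $K\cap\partial B(x,b)\ne\emptyset$. Let $\mathcal{A},\mathcal{B}$ be finite subsets of $\mathbb{R}^d$ with $\mathcal{A}\subset B(x,a)$ and $\mathcal{B}\subset K\setminus B(x,a)$. If $\mathcal{B}$ contains a $K$-wall around $B(x,a)$ in $B(x,b)$, then $$|M(\mathcal{A}\cup\mathcal{B})-M(\mathcal{B})|\le c|\mathcal{A}|\,b$$ for a constant $c$ depending only on $d$. If no such wall exists, then $|M(\mathcal{A}\cup\mathcal{B})-M(\mathcal{B})|\le c|\mathcal{A}|\,\mathrm{diameter}(K)$.
   Context: For a finite set $X\subset\mathbb{R}^d$, $M(X)$ is the total length of a minimal spanning tree of the complete graph on $X$ with Euclidean edge lengths. $B(x,r)=x+[-r,r]^d$; $S(p,r)$ is the closed Euclidean ball of radius $r$ centered at $p$; $d(\cdot,\cdot)$ is Euclidean distance. Definition (wall): for $b>a>0$, $x\in\mathbb{R}^d$ and a cube $K\supset B(x,a)$ with $K\cap\partial B(x,b)\ne\emptyset$, a set $\mathfrak{W}\subset\mathbb{R}^d$ contains a $K$-wall around $B(x,a)$ in $B(x,b)$ if for every $p_1\in\partial B(x,a)$ and every $p_2\in K\cap\partial B(x,b)$ the set $K\cap\mathfrak{W}\cap S(p_1,\tfrac34 d(p_1,p_2))\cap S(p_2,\tfrac34 d(p_1,p_2))\cap(B(x,b)\setminus B(x,a))$ is nonempty. *)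

(* Defs.v *)
From HB Require Import structures.
From mathcomp Require Import all_boot all_order all_algebra.
From mathcomp Require Import finmap.
From mathcomp Require Import all_classical all_reals.
Set Implicit Arguments. Unset Strict Implicit. Unset Printing Implicit Defensive.
Import Order.TTheory GRing.Theory Num.Theory.
Local Open Scope ring_scope.
Local Open Scope classical_set_scope.

Section Geometry.
Variables (R : realType) (d : nat).
Local Notation V := 'rV[R]_d.

Definition edist (p q : V) : R := Num.sqrt (\sum_(i < d) (p ord0 i - q ord0 i) ^+ 2).

(* sup-norm distance; B(x,r) = x + [-r,r]^d = { p | supdist x p <= r } *)
Definition supdist (x p : V) : R := \big[Num.max/0]_(i < d) `|p ord0 i - x ord0 i|.

Definition cube (x : V) (r : R) : set V := [set p | supdist x p <= r].
Definition cube_bd (x : V) (r : R) : set V := [set p | supdist x p = r].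
Definition eball (p : V) (r : R) : set V := [set z | edist p z <= r].

Definition diameter (K : set V) : R :=
  sup [set r | exists p q, K p /\ K q /\ r = edist p q].

Definition contains_wall (W : set V) (K : set V) (x : V) (a b : R) : Prop :=
  forall p1 p2, cube_bd x a p1 -> (K `&` cube_bd x b) p2 ->
    (K `&` W `&` eball p1 (3/4 * edist p1 p2) `&` eball p2 (3/4 * edist p1 p2)
       `&` (cube x b `\` cube x a)) !=set0.

(* E (ordered pairs, each undirected edge listed once) is a spanning tree of
   the complete graph on X: edges join distinct points of X, the graph (X,E)
   is connected and has #|X| - 1 edges. *)
Definition spanning_tree (X : {fset V}) (E : {fset V * V}) : Prop :=
  [/\ (forall e, e \in E -> [/\ e.1 \in X, e.2 \in X, e.1 != e.2 & (e.2, e.1) \notin E]),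
      (forall p q, p \in X -> q \in X -> exists s : seq V,
          path (fun u v => ((u, v) \in E) || ((v, u) \in E)) p s /\ last p s = q)
    & #|` E| = (#|` X|).-1]%fset.

Definition tree_length (E : {fset V * V}) : R := \sum_(e <- E) edist e.1 e.2.

Definition MST (X : {fset V}) : R :=
  inf [set w | exists E, spanning_tree X E /\ w = tree_length E].

End Geometry.

(* Main.v *)
From HB Require Import structures.
From mathcomp Require Import all_boot all_order all_algebra.
From mathcomp Require Import finmap.
From mathcomp Require Import all_classical all_reals all_analysis.
From mathcomp Require Import ring lra zify.
Require Import Defs.
Import Order.TTheory GRing.Theory Num.Theory.
Import numFieldTopology.Exports numFieldNormedType.Exports.
Local Open Scope ring_scope.
Local Open Scope classical_set_scope.
Set Implicit Arguments.
Unset Strict Implicit.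
Section CS.
Variable R : realType.

Lemma cs_ineq (n : nat) (u v : 'I_n -> R) :
  (\sum_i u i * v i) ^+ 2 <= (\sum_i u i ^+ 2) * (\sum_i v i ^+ 2).
Proof.
have H : 0 <= \sum_i \sum_j (u i * v j - u j * v i) ^+ 2.
  by apply: sumr_ge0 => i _; apply: sumr_ge0 => j _; apply: sqr_ge0.
have E : \sum_i \sum_j (u i * v j - u j * v i) ^+ 2 =
   2 * ((\sum_i u i ^+ 2) * (\sum_i v i ^+ 2)) - 2 * (\sum_i u i * v i) ^+ 2.
  have -> : \sum_i \sum_j (u i * v j - u j * v i) ^+ 2 =
     \sum_i \sum_j (u i ^+ 2 * v j ^+ 2) + \sum_i \sum_j (v i ^+ 2 * u j ^+ 2)
     - 2 * \sum_i \sum_j ((u i * v i) * (u j * v j)).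
    rewrite mulr_sumr -big_split -sumrB /=; apply: eq_bigr => i _.
    rewrite mulr_sumr -big_split -sumrB /=; apply: eq_bigr => j _.
    ring.
  rewrite -!big_distrlr /= expr2 (mulrC (\sum_i v i ^+ 2)).
  by ring.
lra.
Qed.

End CS.

Section Basics.
Variables (R : realType) (d : nat).
Local Notation V := 'rV[R]_d.
Implicit Types p q r : V.

Definition esq (p q : V) : R := \sum_(i < d) (p ord0 i - q ord0 i) ^+ 2.

Lemma esq_ge0 p q : 0 <= esq p q.
Proof. by apply: sumr_ge0 => i _; apply: sqr_ge0. Qed.

Lemma edistE p q : edist p q = Num.sqrt (esq p q).
Proof. by []. Qed.

Lemma edist_ge0 p q : 0 <= edist p q.
Proof. exact: sqrtr_ge0. Qed.

Lemma sqr_edist p q : edist p q ^+ 2 = esq p q.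
Proof. by rewrite edistE sqr_sqrtr // esq_ge0. Qed.

Lemma esq_sym p q : esq p q = esq q p.
Proof. by apply: eq_bigr => i _; rewrite -sqrrN opprB. Qed.

Lemma edist_sym p q : edist p q = edist q p.
Proof. by rewrite !edistE esq_sym. Qed.

Lemma edist_pp p : edist p p = 0.
Proof.
rewrite edistE /esq (eq_bigr (fun _ => 0)) ?big1 ?sqrtr0 // => i _.
by rewrite subrr expr0n.
Qed.

Lemma edist_triangle p q r : edist p r <= edist p q + edist q r.
Proof.
set U := esq p q; set W := esq q r.
set C := \sum_(i < d) (p ord0 i - q ord0 i) * (q ord0 i - r ord0 i).
have ES : esq p r = U + 2 * C + W.
  rewrite /U /W /C /esq mulr_sumr -!big_split /=; apply: eq_bigr => i _; ring.
have CS := @cs_ineq R d (fun i => p ord0 i - q ord0 i) (fun i => q ord0 i - r ord0 i).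
have HC : C <= edist p q * edist q r.
  apply: le_trans (ler_norm C) _.
  rewrite -sqrtr_sqr !edistE -sqrtrM ?esq_ge0 // ler_sqrt //.
  by apply: mulr_ge0; apply: esq_ge0.
have h1 := edist_ge0 p q; have h2 := edist_ge0 q r.
rewrite edistE -[X in _ <= X]ger0_norm ?addr_ge0 // -sqrtr_sqr ler_sqrt ?sqr_ge0 //.
rewrite ES sqrrD !sqr_edist -/U -/W; lra.
Qed.


End Basics.
Section Geo.
Variables (R : realType) (d : nat).
Local Notation V := 'rV[R]_d.
Implicit Types p q r x y u : V.

Lemma coord_le_edist p q i : `|p ord0 i - q ord0 i| <= edist p q.
Proof.
rewrite edistE -sqrtr_sqr ler_sqrt ?esq_ge0 // /esq (bigD1 i) //= lerDl.
by apply: sumr_ge0 => j _; apply: sqr_ge0.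
Qed.

Lemma edist_le_coord p q m : 0 <= m -> (forall i, `|p ord0 i - q ord0 i| <= m) ->
  edist p q <= d%:R * m.
Proof.
move=> m0 H; rewrite edistE -[X in _ <= X]ger0_norm ?mulr_ge0 ?ler0n //.
rewrite -sqrtr_sqr ler_sqrt ?sqr_ge0 //.
apply: le_trans (_ : \sum_(i < d) m ^+ 2 <= _).
  apply: ler_sum => i _; have := H i; rewrite ler_norml => /andP[h1 h2].
  set z := _ - _ in h1 h2 *; nra.
rewrite sumr_const card_ord exprMn -mulr_natl.
have hd : (d%:R : R) <= d%:R ^+ 2 by rewrite -natrX ler_nat; nia.
have := sqr_ge0 m; nra.
Qed.

Lemma supdist_ge0 x p : 0 <= supdist x p.
Proof.
rewrite /supdist; elim/big_ind: _ => //.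
by move=> u v hu hv; rewrite le_max hu.
Qed.

Lemma coord_le_supdist x p i : `|p ord0 i - x ord0 i| <= supdist x p.
Proof. exact: le_bigmax. Qed.

Lemma supdist_le x p (r : R) : 0 <= r ->
  (supdist x p <= r) <-> (forall i, `|p ord0 i - x ord0 i| <= r).
Proof.
move=> r0; split.
  by move=> h i; apply: le_trans h; apply: coord_le_supdist.
by move=> h; apply/bigmax_leP; split.
Qed.

Definition seg p u (t : R) : V := p + t *: (u - p).

Lemma seg_coord p u t i : seg p u t ord0 i = p ord0 i + t * (u ord0 i - p ord0 i).
Proof. by rewrite /seg !mxE. Qed.

Lemma seg0 p u : seg p u 0 = p.
Proof. by rewrite /seg scale0r addr0. Qed.

Lemma seg1 p u : seg p u 1 = u.
Proof. by rewrite /seg scale1r addrC subrK. Qed.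

Lemma edist_seg p u t t' : edist (seg p u t) (seg p u t') = `|t - t'| * edist p u.
Proof.
rewrite !edistE /esq.
rewrite (eq_bigr (fun i => (t - t') ^+ 2 * (p ord0 i - u ord0 i) ^+ 2)); last first.
  by move=> i _; rewrite !seg_coord; ring.
by rewrite -mulr_sumr sqrtrM ?sqr_ge0 // sqrtr_sqr.
Qed.

Lemma cube_convex y s p u t : cube y s p -> cube y s u -> 0 <= t <= 1 ->
  cube y s (seg p u t).
Proof.
rewrite /cube /= => hp hu /andP[t0 t1].
have s0 : 0 <= s by apply: le_trans hp; apply: supdist_ge0.
apply/supdist_le => // i; rewrite seg_coord.
have := (@supdist_le y p s s0).1 hp i; have := (@supdist_le y u s s0).1 hu i.
move=> h1 h2.
have -> : p ord0 i + t * (u ord0 i - p ord0 i) - y ord0 i =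
   (1 - t) * (p ord0 i - y ord0 i) + t * (u ord0 i - y ord0 i) by ring.
apply: le_trans (ler_normD _ _) _.
rewrite !normrM (ger0_norm t0) ger0_norm ?subr_ge0 //.
have : (1 - t) * `|p ord0 i - y ord0 i| <= (1 - t) * s.
  by rewrite ler_wpM2l // subr_ge0.
have : t * `|u ord0 i - y ord0 i| <= t * s by rewrite ler_wpM2l.
lra.
Qed.

End Geo.
Section Graph.
Variables (R : realType) (d : nat).
Local Notation V := 'rV[R]_d.
Local Open Scope fset_scope.
Implicit Types (p q u v w : V) (X Y S : {fset V}) (E T : {fset V * V}).

Definition adj E : rel V := fun u v => ((u, v) \in E) || ((v, u) \in E).
Definition conn (r : rel V) p q : Prop := exists s, path r p s /\ last p s = q.

Lemma adj_sym E u v : adj E u v = adj E v u.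
Proof. by rewrite /adj orbC. Qed.

Lemma conn_refl r p : conn r p p.
Proof. by exists [::]. Qed.

Lemma conn_edge (r : rel V) p q : r p q -> conn r p q.
Proof. by move=> h; exists [:: q]; rewrite /= h. Qed.

Lemma conn_trans r p q w : conn r p q -> conn r q w -> conn r p w.
Proof.
move=> [s1 [h1 l1]] [s2 [h2 l2]]; exists (s1 ++ s2).
by rewrite cat_path last_cat l1 h1 h2.
Qed.

Lemma conn_sub (r r' : rel V) p q : subrel r r' -> conn r p q -> conn r' p q.
Proof. by move=> sr [s [h l]]; exists s; split => //; apply: sub_path h. Qed.

Lemma conn_sym (r : rel V) p q : (forall u v, r u v -> r v u) -> conn r p q -> conn r q p.
Proof.
move=> rs [s [h l]]; elim: s p h l => [|v s IH] p /=; first by move=> _ ->; apply: conn_refl.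
move=> /andP[hpv hs] l; apply: conn_trans (IH v hs l) _.
by apply: conn_edge; apply: rs.
Qed.

Lemma conn_adj_sym E p q : conn (adj E) p q -> conn (adj E) q p.
Proof. by apply: conn_sym => u v; rewrite adj_sym. Qed.

Lemma crossing (r : rel V) (P : pred V) a s : path r a s -> P a -> ~~ P (last a s) ->
  exists u v, [/\ r u v, P u & ~~ P v].
Proof.
elim: s a => [|b s IH] a /=; first by move=> _ ->.
move=> /andP[hab hs] Pa; case Pb: (P b).
  by move=> h; apply: (IH b hs Pb h).
by move=> _; exists a, b; rewrite Pb.
Qed.

Definition edges_in X E := forall e, e \in E -> e.1 \in X /\ e.2 \in X.
Definition connected_on X E := forall p q, p \in X -> q \in X -> conn (adj E) p q.

Lemma tree_edges_in X T : spanning_tree X T -> edges_in X T.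
Proof. by case=> h _ _ e /h []. Qed.

Lemma tree_conn X T : spanning_tree X T -> connected_on X T.
Proof. by case=> _ h _ p q hp hq; apply: h. Qed.

Lemma tree_grow X E S T (s0 : V) : edges_in X E -> connected_on X E ->
  S `<=` X -> s0 \in S -> spanning_tree S T -> T `<=` E -> (#|` S| < #|` X|)%N ->
  exists S' T', [/\ S' `<=` X, #|` S'| = (#|` S|).+1, spanning_tree S' T' & T' `<=` E].
Proof.
move=> EX Ec SX s0S tr TE lt.
have [x xX xS] : exists2 x, x \in X & x \notin S.
  case: (fset_0Vmem (X `\` S)) => [h|[x]]; last by rewrite inE => /andP[xS xX]; exists x.
  move/eqP: h; rewrite fsetD_eq0 => /fsubset_leq_card; by rewrite leqNgt lt.
have [s [pth lst]] := Ec s0 x (fsubsetP SX _ s0S) xX.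
have [u [v [huv uS vS]]] : exists u v, [/\ adj E u v, u \in S & v \notin S].
  by apply: (@crossing (adj E) (mem S) s0 s pth s0S); rewrite lst.
have [e [eE e1 e2]] : exists e, [/\ e \in E, ([&& e.1 == u & e.2 == v] || [&& e.1 == v & e.2 == u]) & (e.1 != e.2)].
  have uv : u != v by apply: contraNneq vS => <-.
  move: huv; rewrite /adj; case/orP => h.
    by exists (u, v); rewrite h !eqxx /= uv.
  by exists (v, u); rewrite h !eqxx /= orbT eq_sym uv.
have vX : v \in X.
  move: huv; rewrite /adj; case/orP => /EX [] //.
case: tr => trE trC trN.
have eT : e \notin T.
  apply/negP => /trE [h1 h2 _ _]; move: e1; case/orP => /andP[/eqP E1 /eqP E2].
    by move: vS; rewrite -E2 h2.
  by move: vS; rewrite -E1 h1.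
have S0 : (0 < #|` S|)%N by rewrite (cardfsD1 s0) s0S.
exists (v |` S), (e |` T); split.
- by apply/fsubsetP => z; rewrite !inE => /orP[/eqP -> //|]; apply: (fsubsetP SX).
- by rewrite cardfsU1 vS.
- split.
  + move=> e'; rewrite !inE => /orP[/eqP ->|].
      move: eE eT e1 e2; case: e => a b /= _ eT.
      case/orP => /andP[/eqP -> /eqP ->] ab.
        rewrite uS eqxx orbT ab /=; split => //; rewrite negb_or xpair_eqE (negPf ab) andbF /=.
        by apply/negP => /trE [h1 _ _ _]; move: vS; rewrite /= h1.
      rewrite uS eqxx orbT ab /=; split => //; rewrite negb_or xpair_eqE (negPf ab) andbF /=.
      by apply/negP => /trE [_ h2 _ _]; move: vS; rewrite /= h2.
    move=> /trE [h1 h2 h3 h4]; rewrite h1 h2 !orbT h3 (negPf h4) orbF; split => //.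
    apply/negP => /eqP ee; move: e1; rewrite -ee /=.
    by case/orP => /andP[/eqP E1 /eqP E2]; move: vS; rewrite -?E1 -?E2 ?h1 ?h2.
  + have key : forall z, z \in v |` S -> conn (adj (e |` T)) z u.
      move=> z; rewrite !inE => /orP[/eqP ->|zS].
        apply: conn_edge; rewrite /adj !inE; move: e1; case/orP => /andP[/eqP E1 /eqP E2].
          by rewrite -E1 -E2 -surjective_pairing eqxx /= orbT.
        by rewrite -E1 -E2 -surjective_pairing eqxx.
      apply: conn_sub (trC z u zS uS) => a b; rewrite /adj !inE.
      by case/orP => ->; rewrite !orbT.
    move=> p q hp hq; apply: conn_trans (key p hp) _; apply: conn_adj_sym; exact: key.
  + rewrite cardfsU1 eT cardfsU1 vS trN /=.
    by case: (#|` S|) S0.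
- apply/fsubsetP => z; rewrite !inE => /orP[/eqP -> //|]; apply: (fsubsetP TE).
Qed.


Lemma exists_tree X E : edges_in X E -> connected_on X E ->
  exists T, spanning_tree X T /\ T `<=` E.
Proof.
move=> EX Ec.
case: (fset_0Vmem X) => [->|[s0 s0X]].
  exists fset0; split; last exact: fsub0set.
  split; first by move=> e; rewrite inE.
    by move=> p q; rewrite inE.
  by rewrite !cardfs0.
have claim : forall n, (n < #|` X|)%N -> exists S T,
    [/\ S `<=` X, #|` S| = n.+1, spanning_tree S T & T `<=` E].
  elim=> [_|n IH ltn].
    exists [fset s0], fset0; split.
    - by apply/fsubsetP => z; rewrite inE => /eqP ->.
    - by rewrite cardfs1.
    - split; first by move=> e; rewrite inE.
        by move=> p q; rewrite !inE => /eqP -> /eqP ->; apply: conn_refl.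
      by rewrite cardfs0 cardfs1.
    - exact: fsub0set.
  have [S [T [SX cS tr TE]]] := IH (ltnW ltn).
  case: (fset_0Vmem S) => [S0|[s1 s1S]]; first by move: cS; rewrite S0 cardfs0.
  have lt' : (#|` S| < #|` X|)%N by rewrite cS.
  have [S' [T' [S'X cS' tr' T'E]]] := @tree_grow X E S T s1 EX Ec SX s1S tr TE lt'.
  by exists S', T'; rewrite cS' cS.
have X0 : (0 < #|` X|)%N by rewrite (cardfsD1 s0) s0X.
have lt0 : ((#|` X|).-1 < #|` X|)%N by rewrite prednK.
have [S [T [SX cS tr TE]]] := claim (#|` X|).-1 lt0.
have SXe : S = X.
  apply/eqP; rewrite eqEfcard SX cS prednK // leqnn //.
rewrite -SXe.
by exists T.
Qed.

Lemma sum_fsub (F : V * V -> R) (A B : {fset V * V}) : A `<=` B -> (forall e, 0 <= F e) ->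
  \sum_(e <- A) F e <= \sum_(e <- B) F e.
Proof.
move=> AB F0.
have -> : \sum_(e <- A) F e = \sum_(e <- A) (if e \in A then F e else 0).
  by apply: eq_fbigr => e ->.
rewrite (big_fset_incl _ AB); last by move=> e _ /negPf ->.
by apply: ler_sum => e _; case: ifP => // _; apply: F0.
Qed.

Lemma tree_length_ge0 E : 0 <= tree_length E.
Proof. by apply: sumr_ge0 => e _; apply: edist_ge0. Qed.

Lemma tree_length_sub (A B : {fset V * V}) : A `<=` B -> tree_length A <= tree_length B.
Proof. by move=> AB; apply: sum_fsub => // e; apply: edist_ge0. Qed.

Definition mstset X := [set w : R | exists E : {fset V * V}, spanning_tree X E /\ w = tree_length E]%classic.

Lemma mstset_lb X : has_lbound (mstset X).
Proof. by exists 0 => w [E [_ ->]]; apply: tree_length_ge0. Qed.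

Lemma MST_le_tree X T : spanning_tree X T -> MST X <= tree_length T.
Proof. by move=> tr; apply: (ge_inf (mstset_lb X)); exists T. Qed.

Lemma MST_le X E : edges_in X E -> connected_on X E -> MST X <= tree_length E.
Proof.
move=> EX Ec; have [T [tr TE]] := @exists_tree X E EX Ec.
apply: (le_trans (@MST_le_tree X T tr)); exact: tree_length_sub.
Qed.

End Graph.
Lemma seq_min (R : realType) (A : eqType) (f : A -> R) (s : seq A) (a0 : A) :
  a0 \in s -> exists2 m, m \in s & forall x, x \in s -> f m <= f x.
Proof.
elim: s a0 => [//|a s IH] a0 _.
case: (boolP (s == [::])) => [/eqP ->|sn].
  by exists a; rewrite ?inE // => x; rewrite inE => /eqP ->.
have [b bs] : exists b, b \in s by case: s sn {IH} => // b s _; exists b; rewrite inE eqxx.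
have [m ms hm] := IH b bs.
case: (leP (f a) (f m)) => h.
  exists a; first by rewrite inE eqxx.
  move=> x; rewrite inE => /orP[/eqP ->//|/hm]; exact: le_trans.
exists m; first by rewrite inE ms orbT.
move=> x; rewrite inE => /orP[/eqP ->|/hm //]; exact: ltW.
Qed.

Section Attained.
Variables (R : realType) (d : nat).
Local Notation V := 'rV[R]_d.
Local Open Scope fset_scope.
Implicit Types (p q u v w : V) (X Y S : {fset V}) (E T : {fset V * V}).

Lemma MST_attained X : exists T, spanning_tree X T /\ MST X = tree_length T.
Proof.
have [T0 [tr0 _]] : exists T, spanning_tree X T /\ T `<=` X `*` X.
  apply: (@exists_tree R d X (X `*` X)).
    by move=> e; rewrite in_fsetM => /andP[].
  by move=> p q hp hq; apply: conn_edge; rewrite /adj in_fsetM hp hq.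
pose C := [fset E in fpowerset (X `*` X) | `[< spanning_tree X E >]].
have inC E : spanning_tree X E -> E \in C.
  move=> tr; rewrite !inE /= fpowersetE; apply/andP; split; last exact/asboolP.
  apply/fsubsetP => e /(tree_edges_in tr) [h1 h2]; by rewrite in_fsetM h1 h2.
have [m mC hm] := @seq_min R _ (@tree_length R d) _ _ (inC _ tr0).
have trm : spanning_tree X m.
  by move: mC; rewrite !inE /= => /andP[_ /asboolP].
exists m; split => //; apply/le_anti/andP; split; first exact: MST_le_tree.
apply: lb_le_inf; first by exists (tree_length T0), T0.
by move=> w [E [trE ->]]; apply: hm; apply: inC.
Qed.

Lemma MST_ge0 X : 0 <= MST X.
Proof. by have [T [_ ->]] := MST_attained X; apply: tree_length_ge0. Qed.

End Attained.
Section Ops.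
Variables (R : realType) (d : nat).
Local Notation V := 'rV[R]_d.
Local Open Scope fset_scope.
Local Open Scope ring_scope.
Implicit Types (p q u v w : V) (X Y S : {fset V}) (E T : {fset V * V}).

Lemma len_U1 e E : tree_length (e |` E) <= edist e.1 e.2 + tree_length E.
Proof.
case: (boolP (e \in E)) => h.
  have -> : e |` E = E by apply/fsetUidPr; rewrite fsub1set.
  by rewrite lerDr edist_ge0.
by rewrite /tree_length big_fsetU1.
Qed.

Lemma len_U (A B : {fset V * V}) : tree_length (A `|` B) <= tree_length A + tree_length B.
Proof.
rewrite /tree_length (@big_fsetID _ _ _ _ (mem A)) /=.
have -> : [fset x in A `|` B | x \in A] = A.
  by apply/fsetP => x; rewrite !inE /=; case: (x \in A); case: (x \in B).
apply: lerD => //; apply: sum_fsub => [|e]; last exact: edist_ge0.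
by apply/fsubsetP => x; rewrite !inE /= => /andP[/orP[->|->]] //.
Qed.

Lemma conn_U X E E' : connected_on X E -> connected_on X (E `|` E').
Proof.
move=> h p q hp hq; apply: conn_sub (h p q hp hq) => a b.
by rewrite /adj !inE => /orP[->|->]; rewrite ?orbT.
Qed.

Lemma conn_hub X E c : (forall z, z \in X -> conn (adj E) z c) -> connected_on X E.
Proof.
move=> h p q hp hq; apply: conn_trans (h p hp) _; apply: conn_adj_sym; exact: h.
Qed.

Definition fab a b (e : V * V) : bool :=
  ((e.1 == a) && (e.2 == b)) || ((e.1 == b) && (e.2 == a)).

Definition cut T a b := [fset e in T | ~~ fab a b e].

Lemma fab_sym a b e : fab a b e = fab b a e.
Proof. by rewrite /fab orbC. Qed.

Lemma cut_sym T a b : cut T a b = cut T b a.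
Proof. by apply/fsetP => e; rewrite !inE fab_sym. Qed.

Lemma adj_cut T a b y v : adj T y v -> ~~ fab a b (y, v) -> adj (cut T a b) y v.
Proof.
rewrite /adj !inE /= => h hf; have hf' : ~~ fab a b (v, y).
  by move: hf; rewrite /fab /= orbC; case: (y == a); case: (y == b); case: (v == a); case: (v == b).
by rewrite hf hf' !andbT.
Qed.

Lemma cut_sub T a b : (cut T a b `<=` T)%fset.
Proof. by apply/fsubsetP => e; rewrite !inE /= => /andP[]. Qed.

Lemma split_path T a b y s : path (adj T) y s -> last y s = a ->
  conn (adj (cut T a b)) y a \/ conn (adj (cut T a b)) y b.
Proof.
elim: s y => [|v s IH] y /=; first by move=> _ ->; left; apply: conn_refl.
move=> /andP[hyv hs] l.
case: (boolP (fab a b (y, v))) => hf.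
  move: hf; rewrite /fab /= => /orP[/andP[/eqP -> _]|/andP[/eqP -> _]].
    by left; apply: conn_refl.
  by right; apply: conn_refl.
have e1 := adj_cut hyv hf.
by case: (IH v hs l) => h; [left|right]; apply: conn_trans h; apply: conn_edge.
Qed.

Lemma len_cut T a b : adj T a b -> tree_length (cut T a b) <= tree_length T - edist a b.
Proof.
rewrite /adj => /orP h.
have [e0 [e0T fe0 de0]] : exists e0, [/\ e0 \in T, fab a b e0 & edist e0.1 e0.2 = edist a b].
  case: h => h; first by exists (a, b); rewrite /fab /= !eqxx.
  by exists (b, a); rewrite /fab /= !eqxx orbT edist_sym.
rewrite /tree_length (big_fsetD1 e0 e0T) /= de0 addrC addrK.
apply: sum_fsub => [|e]; last exact: edist_ge0.
apply/fsubsetP => e; rewrite !inE /= => /andP[-> hf]; rewrite andbT.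
by apply: contraNneq hf => ->.
Qed.

Lemma exch X T a b w : spanning_tree X T -> tree_length T = MST X -> adj T a b ->
  w \in X -> conn (adj (cut T a b)) w a -> edist w b < edist a b -> False.
Proof.
move=> tr opt ab wX wa lt.
have bX : b \in X.
  by move: ab; rewrite /adj => /orP[] /(tree_edges_in tr) [].
pose E := (w, b) |` cut T a b.
have EX : edges_in X E.
  move=> e; rewrite !inE => /orP[/eqP -> //|/andP[/(tree_edges_in tr) // _]].
have Ec : connected_on X E.
  apply: (conn_hub (E := E) (c := a)) => z zX.
  have aX : a \in X by move: ab; rewrite /adj => /orP[] /(tree_edges_in tr) [].
  have [s' [pth' l']] := tree_conn tr zX aX.
  have sub : subrel (adj (cut T a b)) (adj E).
    by move=> u v; rewrite /adj !inE => /orP[->|->]; rewrite ?orbT.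
  case: (split_path b pth' l') => h; first exact: conn_sub h.
  apply: conn_trans (conn_sub sub h) _.
  apply: conn_trans (conn_sub sub wa); apply: conn_edge.
  by rewrite /adj !inE eqxx orbT.
have h1 := MST_le EX Ec.
have h2 := len_U1 (w, b) (cut T a b).
have h3 := len_cut ab.
rewrite /= -/E in h2; rewrite -opt in h1; lra.
Qed.

End Ops.
Lemma sum_const_seq (R : realType) (T : Type) (s : seq T) (c : R) :
  \sum_(i <- s) c = c *+ size s.
Proof. by elim: s => [|a s IH]; rewrite ?big_nil ?big_cons ?IH ?mulrS. Qed.

Section Ops2.
Variables (R : realType) (d : nat).
Local Notation V := 'rV[R]_d.
Local Open Scope fset_scope.
Local Open Scope ring_scope.
Implicit Types (p q u v w : V) (X Y S : {fset V}) (E T : {fset V * V}).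

Lemma exch2 X T a b w : spanning_tree X T -> tree_length T = MST X -> adj T a b ->
  w \in X -> conn (adj (cut T a b)) w b -> edist w a < edist a b -> False.
Proof.
move=> tr opt ab wX wb lt.
apply: (exch (a := b) (b := a) tr opt _ wX); first by rewrite adj_sym.
  by rewrite cut_sym; exact: wb.
by rewrite (edist_sym b a).
Qed.

Lemma angle X T p u1 u2 : spanning_tree X T -> tree_length T = MST X ->
  adj T p u1 -> adj T p u2 -> u1 != u2 -> edist p u2 <= edist u1 u2.
Proof.
move=> tr opt h1 h2 ne; rewrite leNgt; apply/negP => lt.
have u1X : u1 \in X by move: h1; rewrite /adj => /orP[] /(tree_edges_in tr) [].
apply: (exch tr opt h2 u1X _ lt).
apply: conn_edge; apply: adj_cut; first by rewrite adj_sym.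
rewrite /fab /= (negPf ne) andFb orbF.
apply/negP => /andP[/eqP e1 /eqP e2]; move: ne; by rewrite e1 e2 eqxx.
Qed.

Lemma avoid_prefix T p y s : path (adj T) y s -> last y s = p -> y != p ->
  exists u, adj T u p /\ conn (fun a b => [&& adj T a b, a != p & b != p]) y u.
Proof.
elim: s y => [|v s IH] y /=; first by move=> _ -> /eqP.
move=> /andP[hyv hs] l yp.
case: (boolP (v == p)) => [/eqP vp|vp].
  by exists y; split; [rewrite -vp | apply: conn_refl].
have [u [hu hc]] := IH v hs l vp.
exists u; split => //; apply: conn_trans hc; apply: conn_edge.
by rewrite hyv yp vp.
Qed.

Lemma add1 Y p L : 0 <= L -> (Y = fset0 \/ exists2 q, q \in Y & edist p q <= L) ->
  MST (p |` Y) <= MST Y + L.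
Proof.
move=> L0 [->|[q qY pq]].
  have : MST (p |` fset0) <= tree_length (fset0 : {fset V * V}).
    apply: MST_le; first by move=> e; rewrite inE.
    move=> a b; rewrite !inE !orbF => /eqP -> /eqP ->; exact: conn_refl.
  rewrite /tree_length big_seq_fset0 => h.
  by apply: le_trans h _; rewrite addr_ge0 // MST_ge0.
have [T [tr opt]] := MST_attained Y.
pose E := (p, q) |` T.
have EX : edges_in (p |` Y) E.
  move=> e; rewrite !inE => /orP[/eqP -> /=|/(tree_edges_in tr) [-> ->]].
    by rewrite eqxx qY orbT.
  by rewrite !orbT.
have Ec : connected_on (p |` Y) E.
  apply: (conn_hub (E := E) (c := q)) => z; rewrite !inE => /orP[/eqP ->|zY].
    by apply: conn_edge; rewrite /adj !inE eqxx.
  apply: conn_sub (tree_conn tr zY qY) => a b.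
  by rewrite /adj !inE => /orP[->|->]; rewrite ?orbT.
have h1 := MST_le EX Ec.
have h2 := len_U1 (p, q) T.
rewrite /= -/E in h2; rewrite opt; lra.
Qed.

End Ops2.
Section Remove.
Variables (R : realType) (d : nat).
Local Notation V := 'rV[R]_d.
Local Open Scope fset_scope.
Local Open Scope ring_scope.
Implicit Types (p q u v w : V) (X Y S : {fset V}) (E T : {fset V * V}).

Lemma tree_edge X T e : spanning_tree X T -> e \in T ->
  [/\ e.1 \in X, e.2 \in X, e.1 != e.2 & (e.2, e.1) \notin T].
Proof. by case=> h _ _ /h. Qed.

Lemma remove1 X Y T p (L : R) (N : nat) : p \notin Y -> X = p |` Y ->
  spanning_tree X T -> tree_length T = MST X -> 0 <= L ->
  (forall u v, u \in Y -> v \in Y -> adj T p u -> adj T p v -> edist u v <= L) ->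
  (#|` [fset u in Y | adj T p u]| <= N)%N ->
  MST Y <= MST X + N%:R * L.
Proof.
move=> pY XE tr opt L0 HL HN.
pose Nb := [fset u in Y | adj T p u].
pose Tp := [fset e in T | (e.1 != p) && (e.2 != p)].
have TpY : edges_in Y Tp.
  move=> e; rewrite !inE /= => /andP[/(tree_edges_in tr) [h1 h2] /andP[n1 n2]].
  by move: h1 h2; rewrite XE !inE (negPf n1) (negPf n2).
have Tpsub : (Tp `<=` T)%fset by apply/fsubsetP => e; rewrite !inE /= => /andP[].
have claim : forall y, y \in Y -> exists2 u, u \in Nb & conn (adj Tp) y u.
  move=> y yY.
  have yX : y \in X by rewrite XE !inE yY orbT.
  have pX : p \in X by rewrite XE !inE eqxx.
  have [s [pth l]] := tree_conn tr yX pX.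
  have yp : y != p by apply: contraNneq pY => <-.
  have [u [hu hc]] := avoid_prefix pth l yp.
  have up : u != p.
    case/orP: hu => h; have [_ _ ne _] := tree_edge tr h; first exact: ne.
    by rewrite eq_sym.
  have uY : u \in Y.
    case/orP: hu => h; have [h1 h2 _ _] := tree_edge tr h.
      by move: h1; rewrite XE !inE /= (negPf up).
    by move: h2; rewrite XE !inE /= (negPf up).
  exists u; first by rewrite !inE uY adj_sym.
  apply: conn_sub hc => a b /and3P[hab ha hb].
  by move: hab; rewrite /adj !inE /= ha hb !andbT.
have NL : 0 <= N%:R * L by rewrite mulr_ge0.
have lenTp : tree_length Tp <= MST X by rewrite -opt; apply: tree_length_sub.
case: (fset_0Vmem Nb) => [N0|[u0 u0N]].
  have : connected_on Y Tp.
    by move=> a b /claim [u]; rewrite N0 inE.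
  move=> /(MST_le TpY) h; lra.
pose St := [fset (u, u0) | u in Nb].
pose E := Tp `|` St.
have NbY : forall u, u \in Nb -> u \in Y by move=> u; rewrite !inE => /andP[].
have EY : edges_in Y E.
  move=> e; rewrite in_fsetU => /orP[/TpY //|].
  move=> /imfsetP [u uN ->] /=; split; exact: NbY.
have Ec : connected_on Y E.
  apply: (conn_hub (E := E) (c := u0)) => z /claim [u uN hc].
  have sub : subrel (adj Tp) (adj E).
    by move=> a b; rewrite /adj !in_fsetU => /orP[->|->]; rewrite ?orbT.
  apply: conn_trans (conn_sub sub hc) _; apply: conn_edge.
  rewrite /adj in_fsetU; apply/orP; left; apply/orP; right.
  by apply/imfsetP; exists u.
have lenSt : tree_length St <= N%:R * L.
  rewrite /tree_length big_imfset /=; last by move=> a b _ _ [].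
  apply: le_trans (_ : \sum_(u <- enum_fset Nb) L <= _).
    rewrite big_seq [X in _ <= X]big_seq; apply: ler_sum => u uN; apply: HL; rewrite ?NbY //.
      by move: uN; rewrite !inE => /andP[].
    by move: u0N; rewrite !inE => /andP[].
  rewrite sum_const_seq -mulr_natl.
  have hN : ((size (enum_fset Nb))%:R : R) <= N%:R by rewrite ler_nat.
  nra.
have h1 := MST_le EY Ec.
have h2 := len_U Tp St.
lra.
Qed.

End Remove.
Section Packing.
Variables (R : realType) (d : nat).
Local Notation V := 'rV[R]_d.
Local Open Scope ring_scope.
Implicit Types (p q u v w : V).

Lemma edist_eq0 p q : edist p q = 0 -> p = q.
Proof.
rewrite edistE => /eqP; rewrite sqrtr_eq0 => h.
have h0 : esq p q = 0 by apply/le_anti; rewrite h esq_ge0.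
apply/rowP => j.
have := @psumr_eq0P R _ xpredT (fun i => (p ord0 i - q ord0 i) ^+ 2) (fun i _ => sqr_ge0 _) h0 j isT.
by move/eqP; rewrite sqrf_eq0 subr_eq0 => /eqP.
Qed.

Lemma edist_gt0 p q : p != q -> 0 < edist p q.
Proof.
move=> ne; rewrite lt_neqAle edist_ge0 andbT eq_sym; apply/negP => /eqP /edist_eq0 e.
by rewrite e eqxx in ne.
Qed.

Definition mm := d.+1.

Definition cell p u : {ffun 'I_d -> 'I_(2 * mm).+1} :=
  [ffun i => inord (Num.truncn (mm%:R * ((u ord0 i - p ord0 i) / edist p u) + mm%:R))].

Lemma cell_val p u i : p != u ->
  let x := mm%:R * ((u ord0 i - p ord0 i) / edist p u) + mm%:R in
  0 <= x /\ nat_of_ord (cell p u i) = Num.truncn x.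
Proof.
move=> ne x.
have r0 := edist_gt0 ne.
have hc : `|(u ord0 i - p ord0 i) / edist p u| <= 1.
  rewrite normrM normfV (gtr0_norm r0) ler_pdivrMr // mul1r distrC.
  exact: coord_le_edist.
move: hc; rewrite ler_norml => /andP[h1 h2].
have m0 : (0 : R) < mm%:R by rewrite ltr0n.
have x0 : 0 <= x by rewrite /x; nra.
split => //; rewrite ffunE inordK //.
rewrite ltnS truncn_le_nat /x.
have -> : (2 * mm).+1%:R = (2 : R) * mm%:R + 1 by rewrite -natr1 natrM.
nra.
Qed.

Lemma packing p (S : {fset V}) : p \notin S ->
  (forall u1 u2, u1 \in S -> u2 \in S -> u1 != u2 ->
     edist p u1 <= edist u1 u2 /\ edist p u2 <= edist u1 u2) ->
  (#|` S| <= (2 * mm).+1 ^ d)%N.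
Proof.
move=> pS H.
have inj : {in S &, injective (cell p)}.
  move=> u1 u2 h1 h2 eqc; apply/eqP; apply/negPn/negP => ne.
  have [H1 H2] := H u1 u2 h1 h2 ne.
  have n1 : p != u1 by apply: contraNneq pS => ->.
  have n2 : p != u2 by apply: contraNneq pS => ->.
  have r1p := edist_gt0 n1; have r2p := edist_gt0 n2.
  set r1 := edist p u1 in r1p H1 H2 *; set r2 := edist p u2 in r2p H1 H2 *.
  set t1 := r1^-1; set t2 := r2^-1.
  pose al i := u1 ord0 i - p ord0 i; pose be i := u2 ord0 i - p ord0 i.
  pose del i := al i * t1 - be i * t2.
  have hd : forall i, (mm%:R * del i) ^+ 2 <= 1.
    move=> i; have [x10 c1] := cell_val i n1; have [x20 c2] := cell_val i n2.
    have e : Num.truncn (mm%:R * ((u1 ord0 i - p ord0 i) / r1) + mm%:R) =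
             Num.truncn (mm%:R * ((u2 ord0 i - p ord0 i) / r2) + mm%:R).
      by rewrite -c1 -c2 eqc.
    move: (truncn_itv x10) (truncn_itv x20); rewrite e => /andP[a1 b1] /andP[a2 b2].
    move: a1 b1 a2 b2; set k := Num.truncn _.
    set x1 := mm%:R * ((u1 ord0 i - p ord0 i) / r1) + mm%:R.
    set x2 := mm%:R * ((u2 ord0 i - p ord0 i) / r2) + mm%:R => a1 b1 a2 b2.
    have -> : mm%:R * del i = x1 - x2 by rewrite /x1 /x2 /del /al /be /t1 /t2; ring.
    have hk : k.+1%:R = k%:R + (1 : R) by rewrite -natr1.
    rewrite hk in b1 b2.
    have : `|x1 - x2| <= 1 by rewrite ler_norml; apply/andP; split; lra.
    rewrite -(ler_pXn2r (n := 2)) ?expr1n ?normr_ge0 ?ler01 // ?nnegrE ?normr_ge0 //.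
    by rewrite -normrX ger0_norm ?sqr_ge0.
  have Sd : mm%:R ^+ 2 * \sum_i del i ^+ 2 <= d%:R.
    rewrite mulr_sumr; apply: le_trans (_ : \sum_(i < d) (1 : R) <= _).
      by apply: ler_sum => i _; rewrite -exprMn; apply: hd.
    by rewrite sumr_const card_ord.
  pose A := \sum_i al i ^+ 2; pose B := \sum_i be i ^+ 2; pose C := \sum_i al i * be i.
  have ES : \sum_i del i ^+ 2 = t1 ^+ 2 * A + t2 ^+ 2 * B - 2 * t1 * t2 * C.
    rewrite /A /B /C !mulr_sumr -big_split -sumrB /=; apply: eq_bigr => i _.
    rewrite /del; ring.
  have EA : A = r1 ^+ 2.
    rewrite /r1 sqr_edist esq_sym /esq; apply: eq_bigr => i _; done.
  have EB : B = r2 ^+ 2.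
    rewrite /r2 sqr_edist esq_sym /esq; apply: eq_bigr => i _; done.
  have E12 : edist u1 u2 ^+ 2 = A + B - 2 * C.
    rewrite sqr_edist /esq /A /B /C mulr_sumr -big_split -sumrB /=.
    by apply: eq_bigr => i _; rewrite /al /be; ring.
  have d12 := edist_ge0 u1 u2.
  have hA : r1 ^+ 2 <= A + B - 2 * C by rewrite -E12; nra.
  have hB : r2 ^+ 2 <= A + B - 2 * C by rewrite -E12; nra.
  have hC : 2 * C <= r1 * r2.
    rewrite EA EB in hA hB; case: (leP r1 r2) => h; nra.
  have tr1 : t1 * r1 = 1 by rewrite mulVf // gt_eqF.
  have tr2 : t2 * r2 = 1 by rewrite mulVf // gt_eqF.
  have t1p : 0 < t1 by rewrite invr_gt0.
  have t2p : 0 < t2 by rewrite invr_gt0.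
  have hS : 1 <= \sum_i del i ^+ 2.
    rewrite ES EA EB.
    have e1 : t1 ^+ 2 * r1 ^+ 2 = 1 by rewrite -exprMn tr1 expr1n.
    have e2 : t2 ^+ 2 * r2 ^+ 2 = 1 by rewrite -exprMn tr2 expr1n.
    have : 2 * t1 * t2 * C <= t1 * t2 * (r1 * r2).
      have tt : 0 < t1 * t2 by rewrite mulr_gt0.
      have := ler_wpM2l (ltW tt) hC; rewrite !mulrA => h; nra.
    have -> : t1 * t2 * (r1 * r2) = 1 by rewrite mulrACA tr1 tr2 mulr1.
    lra.
  have md : (d%:R : R) + 1 <= mm%:R by rewrite /mm -natr1.
  have d0 : (0 : R) <= d%:R by rewrite ler0n.
  have mq : (d%:R : R) < mm%:R ^+ 2 by nra.
  have m2 : (0 : R) <= mm%:R ^+ 2 by apply: sqr_ge0.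
  clear eqc; nra.
have -> : #|` S| = size (map (cell p) S) by rewrite size_map.
have U : uniq (map (cell p) S) by rewrite map_inj_in_uniq // fset_uniq.
rewrite -(card_uniqP U).
apply: leq_trans (max_card _) _.
by rewrite card_ffun !card_ord.
Qed.

End Packing.
Lemma abs_lin_cont (R : realType) (c k : R) : continuous (fun t : R => `|c + t * k|).
Proof.
move=> t.
apply: cvg_norm; apply: cvgD; first exact: cvg_cst.
by apply: cvgM; [exact: cvg_id | exact: cvg_cst].
Qed.

Lemma bigmax_cont (R : realType) (n : nat) (F : 'I_n -> R -> R) : (forall i, continuous (F i)) ->
  continuous (fun t => \big[Num.max/0]_(i < n) F i t).
Proof.
elim: n F => [|n IH] F hF.
  move=> t; under eq_fun => ? do rewrite big_ord0. exact: cst_continuous.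
under eq_fun => s do rewrite big_ord_recl /=.
apply: max_fun_continuous; first exact: hF.
by apply: IH => i; exact: hF.
Qed.

Section Wall.
Variables (R : realType) (d : nat).
Local Notation V := 'rV[R]_d.
Local Open Scope ring_scope.
Implicit Types (p q u v w x y : V).

Lemma supdist_seg_cont x p u : continuous (fun t : R => supdist x (seg p u t)).
Proof.
have -> : (fun t => supdist x (seg p u t)) =
    (fun t => \big[Num.max/0]_(i < d) `|(p ord0 i - x ord0 i) + t * (u ord0 i - p ord0 i)|).
  apply: funext => t; apply: eq_bigr => i _; rewrite seg_coord; congr `|_|; ring.
by apply: bigmax_cont => i; apply: abs_lin_cont.
Qed.

Lemma ivt_up (f : R -> R) (a0 b0 v : R) : continuous f -> a0 <= b0 -> f a0 <= v <= f b0 ->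
  exists c, [/\ a0 <= c, c <= b0 & f c = v].
Proof.
move=> cf ab /andP[h1 h2].
have [|c] := @IVT R f a0 b0 v ab (continuous_subspaceT cf).
  apply/andP; split.
    by rewrite ge_min h1.
  by rewrite le_max h2 orbT.
by rewrite in_itv /= => /andP[c1 c2] fc; exists c.
Qed.

Lemma wall_nbr (a b s : R) x y (B X : {fset V}) T p u :
  0 < a -> a < b -> cube x a `<=` cube y s ->
  contains_wall [set q | q \in B] (cube y s) x a b ->
  (B `<=` X)%fset -> (forall q, q \in X -> cube y s q) ->
  spanning_tree X T -> tree_length T = MST X ->
  cube x a p -> adj T p u -> supdist x u <= b.
Proof.
move=> a0 ab Kx wall BX XK tr opt pa pu.
rewrite leNgt; apply/negP => ub.
have [pX uX] : p \in X /\ u \in X.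
  by case/orP: pu => /(tree_edge tr) [h1 h2 _ _]; split.
have pK : cube y s p by apply: Kx.
have uK := XK u uX.
pose f := fun t : R => supdist x (seg p u t).
have cf : continuous f := supdist_seg_cont (x := x) (p := p) (u := u).
have f0 : f 0 <= a by rewrite /f seg0.
have f1 : b < f 1 by rewrite /f seg1.
have [t2 [t20 t21 ft2]] : exists t, [/\ 0 <= t, t <= 1 & f t = b].
  apply: (ivt_up cf ler01).
  by rewrite (ltW f1) andbT; apply: le_trans f0 (ltW ab).
have [t1 [t10 t12 ft1]] : exists t, [/\ 0 <= t, t <= t2 & f t = a].
  by apply: (ivt_up cf t20); rewrite f0 ft2 (ltW ab).
have t12' : t1 < t2.
  rewrite lt_neqAle t12 andbT; apply/negP => /eqP e.
  by move: ft1; rewrite e ft2 => e'; move: ab; rewrite e' ltxx.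
pose p1 := seg p u t1; pose p2 := seg p u t2.
have p1bd : cube_bd x a p1 by [].
have p2bd : cube_bd x b p2 by [].
have p2K : cube y s p2 by apply: cube_convex => //; rewrite t20 t21.
have [w [[[[[Kw Bw] E1] E2] Aw]]] := wall p1 p2 p1bd (conj p2K p2bd).
have wB : w \in B := Bw.
have wX : w \in X by apply: (fsubsetP BX).
have pu_ne : p != u.
  apply/negP => /eqP e; move: pa; rewrite /cube /= e => h.
  by move: ub; rewrite ltNge (le_trans h (ltW ab)).
set L := edist p u.
have L0 : 0 < L by apply: edist_gt0.
have d12 : edist p1 p2 = (t2 - t1) * L by rewrite /p1 /p2 edist_seg distrC ger0_norm ?subr_ge0.
have dp1 : edist p p1 = t1 * L.
  by rewrite -{1}(seg0 p u) /p1 edist_seg sub0r normrN ger0_norm.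
have dp2u : edist p2 u = (1 - t2) * L.
  have -> : edist p2 u = edist p2 (seg p u 1) by rewrite seg1.
  by rewrite /p2 edist_seg distrC ger0_norm ?subr_ge0.
move: E1 E2; rewrite /eball /= d12 => E1 E2.
have hpw : edist p w < L.
  apply: le_lt_trans (edist_triangle p p1 w) _; rewrite dp1; nra.
have hwu : edist w u < L.
  apply: le_lt_trans (edist_triangle w p2 u) _; rewrite dp2u edist_sym; nra.
have [s' [pth l]] := tree_conn tr wX pX.
case: (split_path u pth l) => h.
  exact: (exch tr opt pu wX h hwu).
by apply: (exch2 tr opt pu wX h); rewrite edist_sym.
Qed.

End Wall.
Section Main.
Variables (R : realType) (d : nat).
Local Notation V := 'rV[R]_d.
Local Open Scope fset_scope.
Local Open Scope ring_scope.
Implicit Types (p q u v w x y : V) (X Y S : {fset V}) (E T : {fset V * V}).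

Definition Nd := ((2 * mm d).+1 ^ d)%N.

Lemma degree X T p Y : spanning_tree X T -> tree_length T = MST X -> p \notin Y ->
  (#|` [fset u in Y | adj T p u]| <= Nd)%N.
Proof.
move=> tr opt pY; apply: packing.
  by apply/negP; rewrite !inE => /andP[h _]; rewrite h in pY.
move=> u1 u2; rewrite !inE => /andP[_ h1] /andP[_ h2] ne; split.
  by rewrite (edist_sym u1 u2); apply: (angle tr opt h2 h1); rewrite eq_sym.
exact: (angle tr opt h1 h2 ne).
Qed.

Lemma main_bounds (A B : {fset V}) (L : R) :
  0 <= L ->
  (forall p, p \in A -> p \notin B) ->
  (forall Y p, (B `<=` Y)%fset -> (Y `<=` A `|` B)%fset -> p \in A -> p \notin Y ->
     Y = fset0 \/ exists2 q, q \in Y & edist p q <= L) ->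
  (forall X T p u v, (B `<=` X)%fset -> (X `<=` A `|` B)%fset -> spanning_tree X T ->
     tree_length T = MST X -> p \in A -> adj T p u -> adj T p v -> edist u v <= L) ->
  MST (A `|` B) <= MST B + #|` A|%:R * L /\
  MST B <= MST (A `|` B) + #|` A|%:R * (Nd%:R * L).
Proof.
move=> L0 disj Hadd Hrem.
suff: forall n A', (A' `<=` A)%fset -> #|` A'| = n ->
  MST (A' `|` B) <= MST B + #|` A'|%:R * L /\
  MST B <= MST (A' `|` B) + #|` A'|%:R * (Nd%:R * L).
  by move=> /(_ _ A (fsubset_refl A) erefl).
elim=> [|n IH] A' sub cA'.
  have -> : A' = fset0 by apply/eqP; rewrite -cardfs_eq0 cA'.
  by rewrite fset0U cardfs0 !mul0r addr0 lexx.
case: (fset_0Vmem A') => [A0|[p pA']]; first by move: cA'; rewrite A0 cardfs0.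
pose A'' := A' `\ p.
have c'' : #|` A''| = n by move: cA'; rewrite (cardfsD1 p) pA' => -[].
have sub'' : (A'' `<=` A)%fset.
  by apply: fsubset_trans sub; apply/fsubsetP => z; rewrite !inE => /andP[].
have [IH1 IH2] := IH A'' sub'' c''.
pose Y := A'' `|` B.
have pA : p \in A by apply: (fsubsetP sub).
have XY : A' `|` B = p |` Y by rewrite /Y fsetUA fsetD1K.
have pY : p \notin Y.
  by rewrite /Y !inE negb_or eqxx /= (disj p pA).
have BY : (B `<=` Y)%fset by apply: fsubsetUr.
have YAB : (Y `<=` A `|` B)%fset by apply: fsetSU.
have add := add1 L0 (Hadd Y p BY YAB pA pY).
have [T [tr opt0]] := MST_attained (p |` Y).
have opt := esym opt0.
have XAB : (p |` Y `<=` A `|` B)%fset.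
  apply/fsubsetP => z; rewrite in_fsetU in_fset1 => /orP[/eqP ->|zY]; last exact: (fsubsetP YAB).
  by rewrite in_fsetU pA.
have BX : (B `<=` p |` Y)%fset by apply: fsubset_trans BY (fsubsetU1 _ _).
have rem := remove1 (N := Nd) pY erefl tr opt L0
  (fun u v _ _ hu hv => Hrem _ T p u v BX XAB tr opt pA hu hv) (degree tr opt pY).
rewrite XY cA' -natr1 /= -/Y; rewrite c'' in IH1 IH2.
have NL : 0 <= Nd%:R * L by rewrite mulr_ge0.
split; nra.
Qed.

End Main.
Section Final.
Variables (R : realType) (d : nat).
Local Notation V := 'rV[R]_d.
Local Open Scope ring_scope.
Implicit Types (p q u v w x y : V).

Lemma cube_dist x (r : R) p q : cube x r p -> cube x r q -> edist p q <= d%:R * (2 * r).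
Proof.
rewrite /cube /= => hp hq.
have r0 : 0 <= r by apply: le_trans hp; apply: supdist_ge0.
apply: edist_le_coord; first by rewrite mulr_ge0.
move=> i; have h1 := (@supdist_le R d x p r r0).1 hp i.
have h2 := (@supdist_le R d x q r r0).1 hq i.
have -> : p ord0 i - q ord0 i = (p ord0 i - x ord0 i) - (q ord0 i - x ord0 i) by ring.
apply: le_trans (ler_normB _ _) _; lra.
Qed.

Lemma cube_mono x (a b : R) p : a <= b -> cube x a p -> cube x b p.
Proof. by rewrite /cube /= => ab h; apply: le_trans h ab. Qed.

Lemma cube_center x (a : R) : 0 <= a -> cube x a x.
Proof.
move=> a0; rewrite /cube /=; apply/supdist_le => // i.
by rewrite subrr normr0.
Qed.

Lemma bd_point x (a : R) (i0 : 'I_d) : 0 <= a -> cube_bd x a (x + \row_(j < d) a).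
Proof.
move=> a0; rewrite /cube_bd /=; apply/le_anti/andP; split.
  apply/supdist_le => // i; rewrite !mxE addrAC subrr add0r ger0_norm //.
apply: le_trans (coord_le_supdist x _ i0); rewrite !mxE addrAC subrr add0r ger0_norm //.
Qed.

Lemma diam_ub y (s : R) p q : cube y s p -> cube y s q -> edist p q <= diameter (cube y s).
Proof.
move=> hp hq; apply: ub_le_sup; last by exists p, q.
exists (d%:R * (2 * s)) => r [p' [q' [h1 [h2 ->]]]].
exact: cube_dist h1 h2.
Qed.

End Final.
Unset Implicit Arguments.
Set Strict Implicit.

Theorem lemma7p5 (R : realType) (d : nat) :
  exists c : R, forall (a b : R) (x y : 'rV[R]_d) (s : R)
    (A B : {fset 'rV[R]_d}),
    0 < a -> a < b ->
    cube x a `<=` cube y s ->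
    (cube y s `&` cube_bd x b) !=set0 ->
    (forall p, p \in A -> cube x a p) ->
    (forall p, p \in B -> (cube y s `\` cube x a) p) ->
    (contains_wall [set p | p \in B] (cube y s) x a b ->
       `|MST (A `|` B)%fset - MST B| <= c * (#|` A|)%:R * b) /\
    (~ contains_wall [set p | p \in B] (cube y s) x a b ->
       `|MST (A `|` B)%fset - MST B| <= c * (#|` A|)%:R * diameter (cube y s)).
Proof.
exists (2 * d%:R * ((Nd d)%:R + 1)).
move=> a b x y s A B a0 ab Kx [z [zK zbd]] HA HB.
have b0 : 0 < b by apply: lt_trans ab.
have [i0 _] : exists i0 : 'I_d, True.
  case: (pickP (@predT 'I_d)) => [i _|h]; first by exists i.
  exfalso; move: zbd; rewrite /cube_bd /= => e.
  have : supdist x z <= 0 by apply/supdist_le => // i; have := h i.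
  by rewrite e leNgt b0.
have d1 : (1 <= d)%N by apply: leq_ltn_trans (ltn_ord i0).
have s0 : 0 <= s by apply: le_trans zK; apply: supdist_ge0.
have XK : forall q, q \in (A `|` B)%fset -> cube y s q.
  move=> q; rewrite in_fsetU => /orP[/HA /Kx //|/HB []] //.
have disj : forall p, p \in A -> p \notin B.
  by move=> p pA; apply/negP => /HB [_]; apply; apply: HA.
set k : R := (#|` A|)%:R.
have k0 : 0 <= k by rewrite ler0n.
set N : R := (Nd d)%:R.
have N0 : 0 <= N by rewrite ler0n.
have dR : (1 : R) <= d%:R by rewrite ler1n.
have fin : forall L M1 M2 : R, 0 <= L -> M1 <= M2 + k * L -> M2 <= M1 + k * (N * L) ->
    `|M1 - M2| <= k * ((N + 1) * L).
  move=> L M1 M2 L0 h1 h2.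
  have P0 : 0 <= k * L by rewrite mulr_ge0.
  have Q0 : 0 <= k * (N * L) by rewrite !mulr_ge0.
  have -> : k * ((N + 1) * L) = k * L + k * (N * L) by ring.
  rewrite ler_norml; apply/andP; split; lra.
split.
- move=> wall.
  set L := d%:R * (2 * b).
  have L0 : 0 <= L by rewrite !mulr_ge0 ?ler0n // ltW.
  have [w [[[[[_ Bw] _] _] [wb _]]]] :=
    wall _ z (bd_point x i0 (ltW a0)) (conj zK zbd).
  have wB : w \in B := Bw.
  have [h1 h2] := main_bounds L0 disj
     (fun Y p BY _ pA _ => or_intror (ex_intro2 _ _ w (fsubsetP BY w wB)
        (cube_dist (cube_mono (ltW ab) (HA p pA)) wb)))
     (fun X T p u v BX XAB tr opt pA hu hv =>
        cube_dist (wall_nbr a0 ab Kx wall BX (fun q hq => XK q (fsubsetP XAB q hq)) tr opt (HA p pA) hu)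
                  (wall_nbr a0 ab Kx wall BX (fun q hq => XK q (fsubsetP XAB q hq)) tr opt (HA p pA) hv)).
  have := fin L _ _ L0 h1 h2.
  have -> : 2 * d%:R * (N + 1) * k * b = k * ((N + 1) * L) by rewrite /L; ring.
  done.
- move=> _.
  set L := diameter (cube y s).
  have L0 : 0 <= L.
    have xK : cube y s x by apply: Kx; apply: cube_center; apply: ltW.
    by apply: le_trans (diam_ub xK xK); rewrite edist_pp.
  have adjX : forall (X : {fset 'rV[R]_d}) (T : {fset 'rV[R]_d * 'rV[R]_d}) (p u : 'rV[R]_d),
      spanning_tree X T -> adj T p u -> u \in X.
    move=> X T p u tr hu; by case/orP: hu => h; have [h1 h2 _ _] := tree_edge tr h.
  have [h1 h2] : MST (A `|` B)%fset <= MST B + k * L /\ MST B <= MST (A `|` B)%fset + k * (N * L).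
    apply: (main_bounds L0 disj).
      move=> Y p BY YAB pA _; case: (fset_0Vmem Y) => [->|[q qY]]; [by left|right].
      exists q => //; apply: diam_ub; apply: XK; first by rewrite in_fsetU pA.
      exact: (fsubsetP YAB).
    move=> X T p u v BX XAB tr opt pA hu hv; apply: diam_ub; apply: XK; apply: (fsubsetP XAB).
      exact: adjX tr hu.
    exact: adjX tr hv.
  have := fin L _ _ L0 h1 h2.
  have Q0 : 0 <= k * ((N + 1) * L) by rewrite !mulr_ge0 // addr_ge0.
  have -> : 2 * d%:R * (N + 1) * k * L = (2 * d%:R) * (k * ((N + 1) * L)) by ring.
  move=> h; apply: le_trans h _; nra.
Qed.
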